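(* Let $\mathcal{T}=(\mathbb{K}_i,\phi_i)_{i=0,\dots,m}$ be a tower with $\mathbb{K}_0=\emptyset$ whose maps are elementary inclusions or elementary contractions, named according to the naming convention below, and let $\hat{\mathbb{K}}_0,\dots,\hat{\mathbb{K}}_m$ be the active small coning construction. For every $i\in\{0,\dots,m\}$, the set of vertices of $\mathbb{K}_i$ equals the set of active vertices of $\hat{\mathbb{K}}_i$.
   Context: Elementary inclusion: $\mathbb{K}_{i+1}=\mathbb{K}_i\cup\{\sigma\}$, $\sigma\notin\mathbb{K}_i$, $\phi_i$ the inclusion. Elementary contraction of distinct vertices $u,v$ of $\mathbb{K}_i$: for one of them, say $v$, the vertex set of $\mathbb{K}_{i+1}$ is that of $\mathbb{K}_i$ minus $v$, $\phi_i(u)=\phi_i(v)=u$, and $\phi_i$ is the identity on other vertices. Active small coning construction: $\hat{\mathbb{K}}_0=\emptyset$; vertices flagged active/inactive, a simplex is active iff all its vertices are; $\mathrm{Act}\overline{\mathrm{St}}(w,\hat{\mathbb{K}}_i)$ = active simplices of $\hat{\mathbb{K}}_i$ in the closed star of $w$. Inclusion of $\sigma$: $\hat{\mathbb{K}}_{i+1}=\hat{\mathbb{K}}_i\cup\{\sigma\}$, a new vertex marked active. Contraction of $u,v$: if $|\mathrm{Act}\overline{\mathrm{St}}(u,\hat{\mathbb{K}}_i)|\le|\mathrm{Act}\overline{\mathrm{St}}(v,\hat{\mathbb{K}}_i)|$, $\hat{\mathbb{K}}_{i+1}=\hat{\mathbb{K}}_i\cup\{\{v\}\cup\tau:\tau\in\mathrm{Act}\overline{\mathrm{St}}(u,\hat{\mathbb{K}}_i)\}$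 and $u$ is marked inactive; otherwise the same with $u$ and $v$ exchanged. Naming convention: each contraction maps $u$ and $v$ to the vertex not marked inactive in that step. *)

(* Defs.v *)
From HB Require Import structures.
From mathcomp Require Import all_boot finmap.
Set Implicit Arguments. Unset Strict Implicit. Unset Printing Implicit Defensive.
Local Open Scope fset_scope.

Section Defs.
Variable V : choiceType.

Definition simplex := {fset V}.
Definition complex := {fset {fset V}}.

Definition is_complex (K : complex) : Prop :=
  forall s, s \in K -> s != fset0 /\ (forall t, t `<=` s -> t != fset0 -> t \in K).

Definition vertices (K : complex) : {fset V} := \bigcup_(s <- K) s.

Definition closed_star (w : V) (K : complex) : complex :=
  [fset t | s in K, t in fpowerset s & (w \in s) && (t != fset0)].

Definition act_closed_star (A : {fset V}) (w : V) (K : complex) : complex :=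
  [fset t in closed_star w K | t `<=` A].

Definition active_vertices (A : {fset V}) (K : complex) : {fset V} :=
  [fset w in vertices K | w \in A].

Definition im_complex (f : V -> V) (K : complex) : complex :=
  [fset [fset f x | x in s] | s : {fset V} in K].

Definition contr_map (del keep : V) : V -> V :=
  fun x => if x == del then keep else x.

(* One step of the tower together with the active small coning construction.
   (K, H, A) -> (K', H', A'): K the tower complex, H = \hat K, A the set of
   vertices flagged active. The contraction step follows the naming convention:
   the surviving vertex is the one not marked inactive. *)
Definition joint_step (K : complex) (H : complex) (A : {fset V})
    (K' : complex) (H' : complex) (A' : {fset V}) : Prop :=
  (exists sigma : simplex,
      sigma \notin K /\ K' = sigma |` K /\ H' = sigma |` H /\
      A' = (if #|` sigma| == 1 then A `|` sigma else A))
  \/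
  (exists u v : V,
      u \in vertices K /\ v \in vertices K /\ u != v /\
      let del := if #|` act_closed_star A u H| <= #|` act_closed_star A v H|
                 then u else v in
      let keep := if #|` act_closed_star A u H| <= #|` act_closed_star A v H|
                  then v else u in
      K' = im_complex (contr_map del keep) K /\
      H' = H `|` [fset keep |` t | t in act_closed_star A del H] /\
      A' = A `\ del).

End Defs.

(* Main.v *)
Require Import Defs.
From HB Require Import structures.
From mathcomp Require Import all_boot finmap.
Local Open Scope fset_scope.

Section L.
Variable V : choiceType.
Implicit Types (K H : complex V) (A : {fset V}).

Lemma memV K x : reflect (exists2 s, s \in K & x \in s) (x \in vertices K).
Proof.
rewrite /vertices; apply: (iffP idP).
  by move/bigfcupP => [s /andP[? _] ?]; exists s.
by move=> [s ? ?]; apply/bigfcupP; exists s; rewrite ?andbT.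
Qed.

Lemma memA A K x : (x \in active_vertices A K) = (x \in vertices K) && (x \in A).
Proof. by rewrite /active_vertices !inE. Qed.

Lemma star_sub A w H t : t \in act_closed_star A w H ->
  t `<=` A /\ exists2 s, s \in H & t `<=` s.
Proof.
rewrite /act_closed_star !inE => /andP[/imfset2P[s sH [t' + ->]] tA].
rewrite !inE fpowersetE => /andP[ts _]; split => //; by exists s.
Qed.

Lemma memVU K B x : (x \in vertices (K `|` B)) = (x \in vertices K) || (x \in vertices B).
Proof.
apply/memV/orP => [[s]|[/memV[s sK xs]|/memV[s sK xs]]].
- by rewrite in_fsetU => /orP[sK|sB] xs; [left|right]; apply/memV; exists s.
- by exists s; rewrite // in_fsetU sK.
- by exists s; rewrite // in_fsetU sK orbT.
Qed.

Lemma memVU1 K s x : (x \in vertices (s |` K)) = (x \in s) || (x \in vertices K).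
Proof.
rewrite memVU; congr (_ || _); apply/memV/idP => [[t]|xs]; last by exists s; rewrite ?inE.
by rewrite inE => /eqP ->.
Qed.

Lemma memVim f K x : reflect (exists2 y, y \in vertices K & x = f y)
  (x \in vertices (im_complex f K)).
Proof.
apply: (iffP idP).
  move/memV => [s /imfsetP [s0 /= s0K ->] /imfsetP [y /= ys0 ->]].
  by exists y => //; apply/memV; exists s0.
move=> [y /memV [s sK ys] ->]; apply/memV; exists [fset f x | x in s].
  by apply/imfsetP; exists s.
by apply/imfsetP; exists y.
Qed.


Lemma contr_case K H A d k :
  vertices K = active_vertices A H -> d \in vertices K -> k \in vertices K -> d != k ->
  vertices (im_complex (contr_map d k) K) =
  active_vertices (A `\ d) (H `|` [fset k |` t | t in act_closed_star A d H]).
Proof.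
move=> IH dK kK dk.
have newsub : forall x, x \in vertices [fset k |` t | t in act_closed_star A d H] ->
    x \in vertices H.
  move=> x /memV [s /imfsetP [t /= tS ->]].
  have [_ [s0 s0H ts0]] := star_sub _ _ _ _ tS.
  rewrite in_fsetU in_fset1 => /orP [/eqP ->|xt].
    by move: kK; rewrite IH memA => /andP[].
  by apply/memV; exists s0 => //; apply: (fsubsetP ts0).
apply/fsetP => x; rewrite memA memVU (orb_idr (newsub x)) in_fsetD1.
have -> : (x \in vertices (im_complex (contr_map d k) K)) = (x != d) && (x \in vertices K).
  apply/memVim/andP => [[y yK ->]|[xd xK]]; last by exists x; rewrite // /contr_map (negbTE xd).
  rewrite /contr_map; case: ifP => [_|/negbT yd]; first by split; rewrite // eq_sym.
  by rewrite (negbTE yd).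
by rewrite IH memA; case: (x \in vertices H); case: (x != d).
Qed.

Lemma step K H A K' H' A' : vertices K = active_vertices A H -> is_complex K' ->
  joint_step K H A K' H' A' -> vertices K' = active_vertices A' H'.
Proof.
move=> IH cK' [[sigma [sK [E1 [E2 E3]]]]|[u [v [uK [vK [uv]]]]]].
  subst K' H' A'.
  apply/fsetP => x; rewrite memA !memVU1 IH memA.
  case: ifP => [/cardfs1P [y ->]|ns1].
    by rewrite !inE; case: (x == y); case: (x \in vertices H); case: (x \in A).
  have sub : forall x, x \in sigma -> x \in vertices K.
    move=> z zs.
    have [_ /(_ [fset z])] := cK' sigma (fsetU11 _ _).
    rewrite fsub1set zs => /(_ isT).
    have nz : [fset z] != fset0.
      by apply/negP => /eqP/fsetP/(_ z); rewrite !inE eqxx.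
    move=> /(_ nz); rewrite in_fsetU in_fset1 => /orP [/eqP es|zK].
      by move: ns1; rewrite -es cardfs1.
    by apply/memV; exists [fset z]; rewrite ?inE.
  case xs: (x \in sigma) => //=.
  by have := sub x xs; rewrite IH memA => /andP[_ ->].
move=> /=; case: ifP => _ [E1 [E2 E3]]; subst K' H' A'; apply: contr_case => //.
by rewrite eq_sym.
Qed.

End L.

Theorem lemma3 (V : choiceType) (m : nat)
    (K H : nat -> complex V) (A : nat -> {fset V}) :
  K 0 = fset0 -> H 0 = fset0 -> A 0 = fset0 ->
  (forall i, i <= m -> is_complex (K i)) ->
  (forall i, i < m -> joint_step (K i) (H i) (A i) (K i.+1) (H i.+1) (A i.+1)) ->
  forall i, i <= m -> vertices (K i) = active_vertices (A i) (H i).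
Proof.
move=> K0 H0 A0 cK st; elim => [_|i IHi lt].
  rewrite K0 H0 A0; apply/fsetP => x; rewrite memA.
  apply/idP/idP; first by move/memV => [s]; rewrite inE.
  by move/andP => [/memV [s]]; rewrite inE.
apply: step (IHi (ltnW lt)) (cK _ lt) (st _ lt).
Qed.
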